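(* Let $\mathbf X$ be a label cover instance and $\mathcal M$ a minion. Then $\kappa_{\mathrm{arc}}(\mathbf X)\to\mathcal M$ if and only if $\mathbf X\to\omega(\mathcal M)$ (minions viewed as structures in the label cover signature).
   Context: Label cover. The label cover signature has a type $X$ for each finite set $X$ and a binary symbol $E_\pi$ of arity $(X,Y)$ for each map $\pi\colon X\to Y$ between finite sets. A homomorphism between structures of this signature is a type-preserving family of maps preserving every $E_\pi$. A label cover instance is a structure $\mathbf S$ of this signature with finitely many nonempty domains, all finite. Arc-consistency on label cover. For a label cover instance $\mathbf S$, let $D_v$ be the type of $v$. Set $\mathcal F_v=D_v$ for each element $v$; while something changes, for each constraint $(v,w)\in E_\pi^{\mathbf S}$ ($\pi\colon D_v\to D_w$), remove from $\mathcal F_w$ elements not in $\pi(\mathcal F_v)$ and remove from $\mathcal F_v$ elements $x$ with $\pi(x)\notin\mathcal F_w$. The output $\kappa_{\mathrm{arc}}(\mathbf S)$ is the label cover instance with an element $v$ of type $\mathcal F_v$ for each element $v$ of $\mathbf S$, and a constraint $(v,w)\in E_{\pi'}$ for each constraint $(v,w)\in E_\pi^{\mathbf S}$, where $\pi'=\pi|_{\mathcal F_v}\colon\mathcal F_v\to\mathcal F_w$. Minions. An (abstract) minion $\mathcal M$ assigns to each finite set $X$ a set $\mathcal M^{(X)}$, nonempty iff $X\ne\emptyset$, and to each map $\pi\colon X\to Y$ a map $\mathcal M^{(X)}\to\mathcal M^{(Y)}$, $f\mapsto f^\pi$, functorially (identities to identities, $(f^\sigma)^\pi=f^{\pi\circ\sigma}$).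 A minion $\mathcal M$ is viewed as the (infinite) structure in the label cover signature with domain $\mathcal M^{(X)}$ of type $X$ and $E_\pi=\{(f,f^\pi)\mid f\in\mathcal M^{(X)}\}$ for $\pi\colon X\to Y$. The minion $\omega(\mathcal M)$. $\omega(\mathcal M)^{(X)}=\{(Y,f)\mid Y\subseteq X,\ f\in\mathcal M^{(Y)}\}$, and for $\pi\colon X\to Y'$, $(Z,f)^\pi=(\pi(Z),f^{\pi|_Z})$, where $\pi|_Z\colon Z\to\pi(Z)$ is the restriction. *)

(* Defs.v *)
From mathcomp Require Import all_boot.
Set Implicit Arguments. Unset Strict Implicit. Unset Printing Implicit Defensive.

(* Finite sets are modelled by finTypes.  A subset A : {set X} is      *)
(* viewed as the finite set subT A = {x : X | x \in A}.                *)
Definition subT (X : finType) (A : {set X}) : finType :=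
  {x : X | x \in A}.

(* A structure in the label cover signature whose "domains" are given by
   a family sob X (for every finite set X) and whose relations are
   E_pi = {(f, smap pi f)} : this is how a minion is viewed as a structure. *)
Record mstruct := MStruct {
  sob : finType -> Type;
  smap : forall X Y : finType, (X -> Y) -> sob X -> sob Y }.

Record minion := Minion {
  mob : finType -> Type;
  mmap : forall X Y : finType, (X -> Y) -> mob X -> mob Y;
  mmap_ext : forall (X Y : finType) (p q : X -> Y) (f : mob X),
      (forall x, p x = q x) -> mmap p f = mmap q f;
  mmap_id : forall (X : finType) (f : mob X), mmap (fun x : X => x) f = f;
  mmap_comp : forall (X Y Z : finType) (s : X -> Y) (p : Y -> Z) (f : mob X),
      mmap p (mmap s f) = mmap (fun x => p (s x)) f;
  mob_nonempty : forall X : finType, inhabited (mob X) <-> inhabited X }.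

Definition minion_struct (M : minion) : mstruct := MStruct (@mmap M).
Coercion minion_struct : minion >-> mstruct.

(* Label cover instance: finitely many elements (the finType V), element
   v has type D v (a finite set), and (v,w) \in E_pi^S iff pi \in E v w
   (pi : D v -> D w, as a finite function). *)
Record lc_instance := LCInstance {
  lcV : finType;
  lcD : lcV -> finType;
  lcE : forall v w : lcV, {set {ffun lcD v -> lcD w}} }.

Definition lc_hom (S : lc_instance) (P : mstruct) : Prop :=
  exists h : forall v : lcV S, sob P (lcD v),
    forall (v w : lcV S) (p : {ffun lcD v -> lcD w}),
      p \in lcE v w -> h w = @smap P _ _ p (h v).

Section Arc.
Variable S : lc_instance.
Notation V := (lcV S).
Notation D := (@lcD S).
Notation E := (@lcE S).

Definition ac_step (F : forall v : V, {set D v}) : forall v : V, {set D v} :=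
  fun v => [set x in F v |
     [forall w : V, [forall p in E v w, (p : D v -> D w) x \in F w]] &&
     [forall u : V, [forall p in E u v, x \in (p : D u -> D v) @: F u]]].

(* Run the refinement until it stabilises; since every non-stable round
   removes at least one element, sum_v |D_v| rounds suffice. *)
Definition arcF : forall v : V, {set D v} :=
  iter (\sum_(v : V) #|D v|) ac_step (fun v => [set: D v]).

Definition kappa_arc : lc_instance :=
  @LCInstance V (fun v => subT (arcF v))
    (fun v w => [set p' : {ffun subT (arcF v) -> subT (arcF w)} |
        [exists p in E v w, [forall x, val (p' x) == p (val x)]]]).
End Arc.

Definition restr (X Y : finType) (p : X -> Y) (Z : {set X}) :
  subT Z -> subT (p @: Z) :=
  fun x => exist (fun y => y \in p @: Z) (p (val x)) (imset_f p (valP x)).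

Definition omega_ob (M : minion) (X : finType) : Type :=
  {Z : {set X} & mob M (subT Z)}.

Definition omega_map (M : minion) (X Y : finType) (p : X -> Y)
  (f : omega_ob M X) : omega_ob M Y :=
  existT (fun Z => mob M (subT Z)) (p @: projT1 f)
         (@mmap M _ _ (@restr X Y p (projT1 f)) (projT2 f)).

Definition omega (M : minion) : mstruct := MStruct (@omega_map M).

(* Main.v *)
Require Import Defs.
From mathcomp Require Import all_boot.
From mathcomp Require Import zify.
From Stdlib Require Import FunctionalExtensionality.

Set Implicit Arguments. Unset Strict Implicit. Unset Printing Implicit Defensive.

Section ArcFacts.
Variable S : lc_instance.
Notation V := (lcV S).
Notation D := (@lcD S).
Notation E := (@lcE S).

Lemma ac_step_sub (F : forall v : V, {set D v}) v : ac_step F v \subset F v.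
Proof. by apply/subsetP => x; rewrite inE => /andP[]. Qed.

Definition msr (F : forall v : V, {set D v}) := \sum_(v : V) #|F v|.

Lemma msr_step (F : forall v : V, {set D v}) :
  ac_step F = F \/ (msr (ac_step F) < msr F)%N.
Proof.
case: (boolP [forall v, ac_step F v == F v]) => [/forallP H|/forallP H].
  by left; apply: functional_extensionality_dep => v; apply/eqP/H.
right; have [v Hv] : exists v, ac_step F v != F v.
  by apply/existsP; rewrite -negb_forall; apply/forallP.
rewrite /msr (bigD1 v) //= [X in (_ < X)%N](bigD1 v) //=.
have H1 : (#|ac_step F v| < #|F v|)%N.
  by apply: proper_card; rewrite properEneq Hv ac_step_sub.
have H2 : (\sum_(i | i != v) #|ac_step F i| <= \sum_(i | i != v) #|F i|)%N.
  by apply: leq_sum => i _; apply: subset_leq_card; apply: ac_step_sub.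
lia.
Qed.

Lemma arcF_fix : ac_step (@arcF S) = @arcF S.
Proof.
have key : forall k, let F := iter k (@ac_step S) (fun v => [set: D v]) in
   ac_step F = F \/ (msr F + k <= \sum_(v : V) #|D v|)%N.
  elim=> [|k IH] /=.
    by right; rewrite addn0 /msr; apply: leq_sum => v _; rewrite cardsT.
  set F := iter k _ _ in IH *.
  case: IH => [H|IH]; first by left; rewrite H.
  case: (msr_step F) => [H|lt]; first by left; rewrite H.
  right. move: lt IH. rewrite /= -/F. set a := msr (ac_step F). set b := msr F. lia.
case: (key (\sum_(v : V) #|D v|)) => // H.
have m0 : msr (@arcF S) = 0.
  move: H; rewrite /arcF; set N := (\sum_(v : _) _)%N; set m := msr _.
  lia.
have e : forall v, @arcF S v = set0.
  move=> v; apply/eqP; rewrite -cards_eq0; apply/eqP.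
  move: m0; rewrite /msr (bigD1 v) //=; lia.
apply: functional_extensionality_dep => v; rewrite e; apply/eqP.
by rewrite eqEsubset sub0set -(e v) ac_step_sub.
Qed.

Lemma arcF_fwd v w (p : {ffun D v -> D w}) x :
  p \in E v w -> x \in @arcF S v -> p x \in @arcF S w.
Proof.
move=> pE; rewrite -{1}arcF_fix inE => /andP[_ /andP[/forallP /(_ w) /forallP H _]].
exact: (implyP (H p) pE).
Qed.

Lemma arcF_img v w (p : {ffun D v -> D w}) :
  p \in E v w -> @arcF S w = (p : D v -> D w) @: @arcF S v.
Proof.
move=> pE; apply/eqP; rewrite eqEsubset; apply/andP; split.
  apply/subsetP => y; rewrite -{1}arcF_fix inE => /andP[_ /andP[_ /forallP /(_ v) /forallP H]].
  exact: (implyP (H p) pE).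
by apply/subsetP => y /imsetP[x xF ->]; apply: arcF_fwd.
Qed.

Lemma consistent_sub (Z : forall v : V, {set D v}) :
  (forall v w (p : {ffun D v -> D w}), p \in E v w -> Z w = (p : D v -> D w) @: Z v) ->
  forall v, Z v \subset @arcF S v.
Proof.
move=> HZ; rewrite /arcF; elim: (\sum_(v : V) _) => [|k IH] v /=.
  exact: subsetT.
apply/subsetP => x xZ; rewrite inE (subsetP (IH v)) //=.
apply/andP; split; apply/forallP => u; apply/forallP => p; apply/implyP => pE.
  apply: (subsetP (IH u)); rewrite (HZ _ _ _ pE); exact: imset_f.
apply: (subsetP (imsetS _ (IH u))); by rewrite -(HZ _ _ _ pE).
Qed.
End ArcFacts.

Lemma sig_mmap (M : minion) (X : finType) (s1 s2 : omega_ob M X) :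
  s1 = s2 -> forall (Y : finType) (k : subT (projT1 s1) -> Y) (k' : subT (projT1 s2) -> Y),
  (forall x x', val x = val x' -> k x = k' x') -> mmap k (projT2 s1) = mmap k' (projT2 s2).
Proof.
move=> <- Y k k' H; apply: mmap_ext => x; exact: H.
Qed.

Lemma mmap_sig (M : minion) (X Y : finType) (p : X -> Y) (Z : {set X}) (Z' : {set Y}) :
  Z' = p @: Z -> forall (p' : subT Z -> subT Z'), (forall x, val (p' x) = p (val x)) ->
  forall f : mob M (subT Z),
  existT (fun A => mob M (subT A)) Z' (mmap p' f) = existT _ (p @: Z) (mmap (@restr _ _ p Z) f).
Proof.
move=> E; subst Z' => p' H f; congr existT; apply: mmap_ext => x; apply: val_inj; exact: H.
Qed.


Theorem mainTheorem14 (X : lc_instance) (M : minion) :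
  lc_hom (kappa_arc X) M <-> lc_hom X (omega M).
Proof.
split.
  case=> h Hh.
  exists (fun v => existT (fun A => mob M (subT A)) (@arcF X v) (h v) : omega_ob M (lcD v)).
  move=> v w p pE /=.
  pose p' : {ffun subT (@arcF X v) -> subT (@arcF X w)} :=
    [ffun x => exist (fun y => y \in @arcF X w) (p (val x)) (arcF_fwd pE (valP x))].
  have p'E : p' \in @lcE (kappa_arc X) v w.
    rewrite inE; apply/existsP; exists p; rewrite pE /=; apply/forallP => x.
    by rewrite ffunE.
  rewrite (Hh v w p' p'E) /omega_map /=.
  apply: mmap_sig; first exact: arcF_img.
  by move=> x; rewrite ffunE.
case=> g Hg.
pose Z v := projT1 (g v).
have HZ : forall v w (p : {ffun lcD v -> lcD w}), p \in lcE v w ->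
    Z w = (p : lcD v -> lcD w) @: Z v.
  by move=> v w p pE; rewrite /Z (Hg v w p pE).
have sub := consistent_sub HZ.
pose incl v (x : subT (Z v)) : subT (@arcF X v) :=
  exist (fun y => y \in @arcF X v) (val x) (subsetP (sub v) _ (valP x)).
exists (fun v => mmap (incl v) (projT2 (g v)) : mob M (@lcD (kappa_arc X) v)).
move=> v w p' /=; rewrite inE => /existsP [p /andP[pE /forallP Hp]].
have HZw := HZ v w p pE.
pose k' (y : subT ((p : @lcD X v -> @lcD X w) @: Z v)) : subT (@arcF X w) :=
  exist (fun y => y \in @arcF X w) (val y)
    (subsetP (sub w) (val y) (eq_ind_r (fun A : {set @lcD X w} => val y \in A) (valP y) HZw)).
rewrite mmap_comp.
rewrite (@sig_mmap M _ (g w) (omega_map p (g v)) (Hg v w p pE) _ (incl w) k'); last first.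
  by move=> x x' e; apply: val_inj.
rewrite /omega_map /= mmap_comp; apply: mmap_ext => x; apply: val_inj => /=.
by rewrite (eqP (Hp _)).
Qed.
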